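(* A ring $R$ is 2-primal if and only if $\beta(R)=E_R(0)$.
   Context: Rings are associative with identity. $\beta(R)$ is the prime radical of $R$ (intersection of all prime ideals). $R$ is 2-primal if the set $\mathcal N(R)$ of nilpotent elements of $R$ equals $\beta(R)$. $E_R(0)=\{ab : a,b\in R,\ a^kb=0 \text{ for some } k\in\mathbb N\}$ (the envelope of the zero submodule of the left module ${}_RR$). *)

(* Defs.v *)
From mathcomp Require Import all_boot all_algebra.
Set Implicit Arguments. Unset Strict Implicit. Unset Printing Implicit Defensive.
Import GRing.Theory.
Local Open Scope ring_scope.

(* Rings: associative with identity, not necessarily commutative (pzRingType; the zero ring is allowed). *)

Definition is_ideal (R : pzRingType) (I : R -> Prop) : Prop :=
  [/\ I 0,
      (forall x y, I x -> I y -> I (x + y)),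
      (forall x, I x -> I (- x)),
      (forall r x, I x -> I (r * x)) &
      (forall r x, I x -> I (x * r))].

Definition is_prime_ideal (R : pzRingType) (P : R -> Prop) : Prop :=
  [/\ is_ideal P,
      ~ P 1 &
      (forall a b, (forall r, P (a * r * b)) -> P a \/ P b)].

Definition prime_radical (R : pzRingType) (x : R) : Prop :=
  forall P : R -> Prop, is_prime_ideal P -> P x.

Definition nilpotent_elt (R : pzRingType) (x : R) : Prop :=
  exists n : nat, x ^+ n = 0.

Definition two_primal (R : pzRingType) : Prop :=
  forall x : R, nilpotent_elt x <-> prime_radical x.

Definition envelope_zero (R : pzRingType) (x : R) : Prop :=
  exists a b : R, x = a * b /\ exists k : nat, a ^+ k * b = 0.

(* Main.v *)
Require Import Defs.
From mathcomp Require Import all_boot all_algebra.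
From mathcomp Require Import boolp classical_sets.
Set Implicit Arguments. Unset Strict Implicit. Unset Printing Implicit Defensive.
Import GRing.Theory.
Local Open Scope ring_scope.
Local Open Scope classical_set_scope.

Section S.
Variable R : pzRingType.

Definition avoid (x : R) (A : R -> Prop) : Prop :=
  [/\ (forall u v, A u -> A v -> A (u + v)),
      (forall u, A u -> A (- u)),
      (forall r u, A u -> A (r * u)),
      (forall r u, A u -> A (u * r)) &
      (forall n, ~ A (x ^+ n))].

Definition gen (A : R -> Prop) (a : R) (y : R) : Prop :=
  forall I : R -> Prop, is_ideal I -> (forall z, A z -> I z) -> I a -> I y.

Lemma gen_ideal A a : is_ideal (gen A a).
Proof.
split.
- by move=> I [h0 _ _ _ _].
- move=> u v hu hv I hI hA ha; have [_ hadd _ _ _] := hI.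
  by apply: hadd; [exact: hu|exact: hv].
- move=> u hu I hI hA ha; have [_ _ hopp _ _] := hI; apply: hopp; exact: hu.
- move=> r u hu I hI hA ha; have [_ _ _ hl _] := hI; apply: hl; exact: hu.
- move=> r u hu I hI hA ha; have [_ _ _ _ hr] := hI; apply: hr; exact: hu.
Qed.

Lemma gen_in A a z : A z -> gen A a z.
Proof. by move=> hz I _ hA _; apply: hA. Qed.

Lemma gen_a A a : gen A a a.
Proof. by move=> I _ _ ha. Qed.

Lemma gen_mul A a b : is_ideal A -> (forall r, A (a * r * b)) ->
  forall u v, gen A a u -> gen A b v -> A (u * v).
Proof.
move=> hA hab u v hu.
have [A0 Aadd Aopp Al Ar] := hA.
have [G0 Gadd Gopp Gl Gr] := gen_ideal A b.
move: v; apply: (hu (fun u => forall v, gen A b v -> A (u * v))).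
- split.
  + by move=> v _; rewrite mul0r.
  + by move=> u1 u2 h1 h2 v hv; rewrite mulrDl; apply: Aadd; [exact: h1|exact: h2].
  + by move=> u1 h1 v hv; rewrite mulNr; apply: Aopp; exact: h1.
  + by move=> r u1 h1 v hv; rewrite -mulrA; apply: Al; exact: h1.
  + by move=> r u1 h1 v hv; rewrite -mulrA; apply: h1; apply: Gl.
- by move=> z hz v hv; apply: Ar.
- move=> v hv.
  suff: forall r, A (a * r * v) by move=> /(_ 1); rewrite mulr1.
  apply: (hv (fun v => forall r, A (a * r * v))).
  + split.
    * by move=> r; rewrite mulr0.
    * by move=> v1 v2 h1 h2 r; rewrite mulrDr; apply: Aadd.
    * by move=> v1 h1 r; rewrite mulrN; apply: Aopp.
    * by move=> s v1 h1 r; rewrite !mulrA -(mulrA a r s); apply: h1.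
    * by move=> s v1 h1 r; rewrite mulrA; apply: Ar.
  + by move=> z hz r; apply: Al.
  + exact: hab.
Qed.

Lemma rad_nil (x : R) : prime_radical x -> nilpotent_elt x.
Proof.
move=> hx; case: (pselect (nilpotent_elt x)) => [//|hn]; exfalso.
have ch : forall F : set (set R), F `<=` avoid x -> total_on F subset ->
    avoid x (\bigcup_(X in F) X).
  move=> F FP Ftot; split.
  - move=> u v [X FX Xu] [Y FY Yv].
    case: (Ftot X Y FX FY) => [XY|YX].
    + exists Y => //; have [h _ _ _ _] := FP Y FY; apply: h => //; exact: XY.
    + exists X => //; have [h _ _ _ _] := FP X FX; apply: h => //; exact: YX.
  - move=> u [X FX Xu]; exists X => //; have [_ h _ _ _] := FP X FX; exact: h.
  - move=> r u [X FX Xu]; exists X => //; have [_ _ h _ _] := FP X FX; exact: h.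
  - move=> r u [X FX Xu]; exists X => //; have [_ _ _ h _] := FP X FX; exact: h.
  - move=> n [X FX Xu]; have [_ _ _ _ h] := FP X FX; exact: (h n).
have [A [hAv hmax]] := Zorn_bigcup ch.
have [Aadd Aopp Al Ar Ax] := hAv.
have A0 : A 0.
  case: (pselect (A 0)) => [//|hA0]; exfalso.
  apply: (hmax (fun y => A y \/ y = 0)).
    split; first by move=> t ht; left.
    by move=> /(_ 0 (or_intror erefl)).
  split.
  - move=> u v [hu|->] [hv|->]; rewrite ?addr0 ?add0r; by [left; apply: Aadd|left|left|right].
  - by move=> u [hu|->]; [left; apply: Aopp|right; rewrite oppr0].
  - by move=> r u [hu|->]; [left; apply: Al|right; rewrite mulr0].
  - by move=> r u [hu|->]; [left; apply: Ar|right; rewrite mul0r].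
  - move=> n [h|h]; first exact: (Ax n).
    by apply: hn; exists n.
have hAi : is_ideal A by split.
have hP : is_prime_ideal A.
  split => //.
    by move=> h; apply: (Ax 0%N); rewrite expr0.
  move=> a b hab.
  case: (pselect (A a)) => ha; first by left.
  case: (pselect (A b)) => hb; first by right.
  exfalso.
  have meet c : ~ A c -> exists n, gen A c (x ^+ n).
    move=> hc; case: (pselect (exists n, gen A c (x ^+ n))) => [//|hno]; exfalso.
    have [G0 Gadd Gopp Gl Gr] := gen_ideal A c.
    apply: (hmax (gen A c)).
      split; first by move=> t ht; apply: gen_in.
      move=> sub; apply: hc; apply: sub; exact: gen_a.
    split => //.
    by move=> n hn'; apply: hno; exists n.
  have [m hm] := meet a ha; have [n hn'] := meet b hb.
  apply: (Ax (m + n)%N); rewrite exprD.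
  exact: (gen_mul hAi hab hm hn').
by apply: (Ax 1%N); rewrite expr1; apply: hx.
Qed.

Lemma rad_ideal : is_ideal (@prime_radical R).
Proof.
split.
- by move=> P [[]].
- by move=> u v hu hv P hP; have [[_ h _ _ _] _ _] := hP; apply: h; [exact: hu|exact: hv].
- by move=> u hu P hP; have [[_ _ h _ _] _ _] := hP; apply: h; exact: hu.
- by move=> r u hu P hP; have [[_ _ _ h _] _ _] := hP; apply: h; exact: hu.
- by move=> r u hu P hP; have [[_ _ _ _ h] _ _] := hP; apply: h; exact: hu.
Qed.

Lemma nil_env (x : R) : nilpotent_elt x -> envelope_zero x.
Proof.
by move=> [n hn]; exists x, 1; split; [rewrite mulr1|exists n; rewrite mulr1].
Qed.

End S.

Theorem theorem4p4 (R : pzRingType) :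
  two_primal R <-> (forall x : R, prime_radical x <-> envelope_zero x).
Proof.
split.
- move=> h2 x; split.
    by move=> /rad_nil; apply: nil_env.
  move=> [a [b [-> [k hk]]]].
  have [N0 Nadd Nopp Nl Nr] := @rad_ideal R.
  have sq (y : R) : prime_radical (y ^+ 2) -> prime_radical y.
    move=> hy; have [n hn] := proj2 (h2 (y ^+ 2)) hy; apply: (proj1 (h2 y)); exists (2 * n)%N; by rewrite exprM.
  have comm (u v : R) : prime_radical (u * v) -> prime_radical (v * u).
    move=> huv; apply: sq.
    have -> : (v * u) ^+ 2 = v * (u * v) * u by rewrite expr2 !mulrA.
    by apply: Nr; apply: Nl.
  have step j : prime_radical (a ^+ j.+2 * b) -> prime_radical (a ^+ j.+1 * b).
    move=> h; set c := a ^+ j.+1 * b.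
    have hca : prime_radical (c * a).
      apply: comm; by rewrite /c mulrA -exprS.
    apply: sq.
    have -> : c ^+ 2 = (c * a) * (a ^+ j * b) by rewrite expr2 /c exprS !mulrA.
    by apply: Nr.
  have hk0 : prime_radical (a ^+ k * b) by rewrite hk.
  case: k hk hk0 => [|k] hk hk0.
    by move: hk; rewrite expr0 mul1r => ->; rewrite mulr0.
  elim: k hk0 {hk} => [|k IH] h; first by rewrite expr1 in h.
  by apply: IH; apply: step.
- move=> h x; split.
    by move=> /nil_env /h.
  exact: rad_nil.
Qed.
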